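(* Let $\varepsilon>0$, $\alpha=\varepsilon/(2M)$, $\lambda=2\alpha/(\alpha+\sqrt{\alpha^2+4L\alpha})$, and $y_0\in\mathrm{dom}\, h$. Run TAA: $s_0=\nabla f(y_0)$, $x_0=\mathrm{argmin}_x\{\langle s_0,x\rangle+h^\alpha(x)\}$, and for $k\ge0$: $\tilde x_{k+1}=(1-\lambda)y_k+\lambda x_k$, $s_{k+1}=(1-\lambda)s_k+\lambda\nabla f(\tilde x_{k+1})$, $x_{k+1}=\mathrm{argmin}_x\{\langle s_{k+1},x\rangle+h^\alpha(x)\}$, $y_{k+1}=(1-\lambda)y_k+\lambda x_{k+1}$. Let $\Gamma_k$ be the ACP model induced by $(y_0,\{\tilde x_{i+1}\}_{i=0}^{k-1},(\lambda,\dots,\lambda))$. Then $(y_k,\Gamma_k)$ is an $\varepsilon$-certificate for $\min_x\phi(x)$ after $k=\tilde{\mathcal{O}}(1+\sqrt{ML/\varepsilon})$ iterations.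
   Context: Let $\|\cdot\|$ be a norm on $\mathbb{R}^n$ with dual norm $\|\cdot\|_*$. Let $f:\mathbb{R}^n\to\mathbb{R}$ be convex, differentiable and $L$-smooth ($L>0$) with respect to $\|\cdot\|$, $h:\mathbb{R}^n\to(-\infty,\infty]$ closed proper convex with bounded domain, and $w:\mathbb{R}^n\to[0,+\infty]$ closed, $1$-strongly convex with respect to $\|\cdot\|$ on $\mathrm{dom}\, h$, with $M:=\max_{x\in\mathrm{dom}\, h}w(x)<\infty$. Let $\phi=f+h$, $h^\alpha=h+\alpha w$, $\phi^\alpha=f+h^\alpha$. Write $\ell_f(x;x_0)=f(x_0)+\langle\nabla f(x_0),x-x_0\rangle$. The ACP model induced by $(y_0,\{p_i\}_{i=0}^{k-1},\zeta)$, $\zeta\in[0,1]^k$, is defined by $\Gamma_0(x)=h^\alpha(x)+\ell_f(x;y_0)$, $\Gamma_{j+1}(x)=(1-\zeta_j)\Gamma_j(x)+\zeta_j(h^\alpha(x)+\ell_f(x;p_j))$. For $u\in\mathrm{dom}\, h$ and $\alpha\le\varepsilon/(2M)$, $(u,\Gamma_k)$ is an $\varepsilon$-certificate if $\phi^\alpha(u)-\min_{x\in\mathbb{R}^n}\Gamma_k(x)\le\varepsilon/2$. The notation $\tilde{\mathcal{O}}$ hides logarithmic factors (in $\varepsilon$ and the initial gap). *)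

(* Defs.v *)
From HB Require Import structures.
From mathcomp Require Import all_boot all_order all_algebra.
From mathcomp Require Import all_classical all_reals all_analysis.
Set Implicit Arguments. Unset Strict Implicit. Unset Printing Implicit Defensive.
Import Order.TTheory GRing.Theory Num.Def Num.Theory.
Import numFieldNormedType.Exports.
Local Open Scope classical_set_scope.
Local Open Scope ring_scope.

Section Defs.
Variables (R : realType) (n : nat).
Notation vec := 'rV[R]_n.

Definition inner (s x : vec) : R := \sum_(i < n) s 0 i * x 0 i.

Definition is_norm (nrm : vec -> R) : Prop :=
  [/\ forall x, nrm x = 0 -> x = 0,
      forall (a : R) x, nrm (a *: x) = `|a| * nrm x &
      forall x y, nrm (x + y) <= nrm x + nrm y].

Definition dual_norm (nrm : vec -> R) (s : vec) : R :=
  sup [set inner s x | x in [set x | nrm x <= 1]].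

Definition grad (f : vec -> R) (x : vec) : vec :=
  \row_(i < n) ('d f x (delta_mx 0 i : vec) : R).

Definition convex_fun (f : vec -> R) : Prop :=
  forall x y (t : R), 0 <= t <= 1 ->
    f (t *: x + (1 - t) *: y) <= t * f x + (1 - t) * f y.

Definition smooth_wrt (nrm : vec -> R) (L : R) (f : vec -> R) : Prop :=
  forall x y, dual_norm nrm (grad f x - grad f y) <= L * nrm (x - y).

Definition dom (h : vec -> \bar R) : set vec := [set x | h x < +oo]%E.

Definition closed_fun (h : vec -> \bar R) : Prop :=
  forall a : R, closed [set x | (h x <= a%:E)%E].

Definition proper_fun (h : vec -> \bar R) : Prop :=
  (forall x, (-oo < h x)%E) /\ exists x, (h x < +oo)%E.

Definition econvex_fun (h : vec -> \bar R) : Prop :=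
  forall x y (t : R), 0 < t < 1 ->
    (h (t *: x + (1 - t) *: y)%R <= t%:E * h x + (1 - t)%R%:E * h y)%E.

Definition bounded_wrt (nrm : vec -> R) (A : set vec) : Prop :=
  exists B : R, forall x, A x -> nrm x <= B.

Definition strongly_convex_on (nrm : vec -> R) (D : set vec) (w : vec -> \bar R) : Prop :=
  forall x y (t : R), D x -> D y -> 0 < t < 1 ->
    (w (t *: x + (1 - t) *: y)%R <=
       t%:E * w x + (1 - t)%R%:E * w y - (t * (1 - t) / 2 * nrm (x - y) ^+ 2)%:E)%E.

Definition halpha (h w : vec -> \bar R) (alpha : R) (x : vec) : \bar R :=
  (h x + alpha%:E * w x)%E.

Definition lin (f : vec -> R) (x0 x : vec) : R := f x0 + inner (grad f x0) (x - x0).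

Fixpoint acp (f : vec -> R) (h w : vec -> \bar R) (alpha : R) (y0 : vec)
    (p : nat -> vec) (zeta : nat -> R) (k : nat) (x : vec) : \bar R :=
  match k with
  | 0 => (halpha h w alpha x + (lin f y0 x)%:E)%E
  | j.+1 => ((1 - zeta j)%R%:E * acp f h w alpha y0 p zeta j x
             + (zeta j)%:E * (halpha h w alpha x + (lin f (p j) x)%:E))%E
  end.

Definition model_min (G : vec -> \bar R) : \bar R := ereal_inf (range G).

Definition eps_certificate (f : vec -> R) (h w : vec -> \bar R) (M alpha eps : R)
    (u : vec) (G : vec -> \bar R) : Prop :=
  [/\ dom h u, alpha <= eps / (2 * M) &
      ((f u)%:E + halpha h w alpha u - model_min G <= (eps / 2)%:E)%E].

End Defs.

(* Main.v *)
Require Import Defs.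
From HB Require Import structures.
From mathcomp Require Import all_boot all_order all_algebra.
From mathcomp Require Import all_classical all_reals all_analysis.
From mathcomp Require Import ring lra.
Import Order.TTheory GRing.Theory Num.Def Num.Theory.
Import numFieldNormedType.Exports.
Local Open Scope classical_set_scope.
Local Open Scope ring_scope.
Set Implicit Arguments. Unset Strict Implicit. Unset Printing Implicit Defensive.

Section Inner.
Variables (R : realType) (n : nat).
Notation vec := 'rV[R]_n.
Implicit Types s t x y : vec.

Lemma innerDl s t x : inner (s + t) x = inner s x + inner t x.
Proof. by rewrite /inner -big_split; apply: eq_bigr => i _; rewrite mxE mulrDl. Qed.
Lemma innerZl a s x : inner (a *: s) x = a * inner s x.
Proof. by rewrite /inner mulr_sumr; apply: eq_bigr => i _; rewrite mxE mulrA. Qed.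
Lemma innerDr s x y : inner s (x + y) = inner s x + inner s y.
Proof. by rewrite /inner -big_split; apply: eq_bigr => i _; rewrite mxE mulrDr. Qed.
Lemma innerZr a s x : inner s (a *: x) = a * inner s x.
Proof. by rewrite /inner mulr_sumr; apply: eq_bigr => i _; rewrite mxE mulrCA. Qed.
Lemma innerNr s x : inner s (- x) = - inner s x.
Proof. by rewrite -scaleN1r innerZr mulN1r. Qed.
Lemma innerBr s x y : inner s (x - y) = inner s x - inner s y.
Proof. by rewrite innerDr innerNr. Qed.
Lemma inner0r s : inner s 0 = 0.
Proof. by rewrite /inner big1 // => i _; rewrite mxE mulr0. Qed.

Lemma vec_decomp x : x = \sum_(i < n) x 0 i *: (delta_mx 0 i : vec).
Proof.
apply/rowP => j; rewrite summxE (bigD1 j) //= !mxE big1 ?addr0.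
  by rewrite !eqxx mulr1.
by move=> i /negbTE ij; rewrite !mxE eq_sym ij andbF mulr0.
Qed.

Lemma diff_inner (f : vec -> R) a v : 'd f a v = inner (grad f a) v.
Proof.
rewrite {1}(vec_decomp v) linear_sum /inner; apply: eq_bigr => i _.
by rewrite linearZ /= /grad mxE mulrC.
Qed.

End Inner.

Section Norm.
Variables (R : realType) (n : nat).
Notation vec := 'rV[R]_n.
Variable nrm : vec -> R.
Hypothesis Hn : is_norm nrm.

Lemma nrm0 : nrm 0 = 0.
Proof. by case: Hn => _ HZ _; rewrite -(scale0r (0:vec)) HZ normr0 mul0r. Qed.
Lemma nrmZ a x : nrm (a *: x) = `|a| * nrm x.
Proof. by case: Hn => H1 H2 H3; auto. Qed.
Lemma nrmD x y : nrm (x + y) <= nrm x + nrm y.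
Proof. by case: Hn => H1 H2 H3; auto. Qed.
Lemma nrmN x : nrm (- x) = nrm x.
Proof. by rewrite -scaleN1r nrmZ normrN normr1 mul1r. Qed.
Lemma nrm_ge0 x : 0 <= nrm x.
Proof.
have := nrmD x (- x); rewrite subrr nrm0 nrmN.
lra.
Qed.
Lemma nrm_eq0 x : nrm x = 0 -> x = 0.
Proof. by case: Hn => H1 H2 H3; auto. Qed.
Lemma nrmB x y : nrm (x - y) = nrm (y - x).
Proof. by rewrite -nrmN opprB. Qed.

Lemma nrm_sum I (r : seq I) (P : pred I) (F : I -> vec) :
  nrm (\sum_(i <- r | P i) F i) <= \sum_(i <- r | P i) nrm (F i).
Proof.
elim/big_ind2 : _ => //; first by rewrite nrm0.
by move=> a1 a2 b1 b2 h1 h2; apply: le_trans (nrmD _ _) (lerD h1 h2).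
Qed.

Lemma coord_le_norm (x : vec) i : `|x 0 i| <= `|x|.
Proof.
have /mapP[j Hj ->] : `|x 0 i| \in [seq `|x k.1 k.2| | k : 'I_1 * 'I_n].
  by apply/mapP; exists (0, i) => //=; rewrite mem_enum.
rewrite [leRHS]/normr /= mx_normrE; apply/bigmax_geP; right => /=.
by exists j.
Qed.

Definition Kn := \sum_(i < n) nrm (delta_mx 0 i : vec).

Lemma Kn_ge0 : 0 <= Kn.
Proof. by apply: sumr_ge0 => i _; exact: nrm_ge0. Qed.

Lemma nrm_le_Kn x : nrm x <= Kn * `|x|.
Proof.
rewrite {1}(vec_decomp x) /Kn mulr_suml.
apply: le_trans (nrm_sum _ _ _) _; apply: ler_sum => i _.
by rewrite nrmZ mulrC ler_wpM2l ?nrm_ge0 ?coord_le_norm.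
Qed.

Lemma nrm_lip x y : `|nrm x - nrm y| <= Kn * `|x - y|.
Proof.
apply: le_trans (nrm_le_Kn (x - y)).
rewrite ler_norml; apply/andP; split.
  have := nrmD x (y - x); rewrite [x + _]addrC subrK (nrmB y x) => H.
  lra.
by have := nrmD (x - y) y; rewrite subrK; lra.
Qed.
End Norm.

Section Norm2.
Variables (R : realType) (n : nat).
Notation vec := 'rV[R]_n.
Variable nrm : vec -> R.
Hypothesis Hn : is_norm nrm.

Lemma nrm_cont : continuous nrm.
Proof.
move=> x; apply/(@cvgrPdist_lt _ _ _ (nbhs x) (nbhs_filter x)) => e e0.
have K1 : 0 < Kn nrm + 1 by have := Kn_ge0 Hn; lra.
have H : \forall t \near x, `|x - t| < e / (Kn nrm + 1).
  by apply: (@cvgr_dist_lt _ _ _ (nbhs x) (nbhs_filter x) id x) => //; exact: divr_gt0.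
apply: filterS H => t Ht.
apply: le_lt_trans (nrm_lip Hn x t) _.
rewrite ltr_pdivlMr // in Ht.
have := Kn_ge0 Hn; have := normr_ge0 (x - t); nra.
Qed.

Lemma norm_lower : exists2 c : R, 0 < c & forall x : vec, `|x| <= c * nrm x.
Proof.
pose S := [set x : vec | `|x| = 1].
have [[x0 Sx0]|S0] := pselect (S !=set0); last first.
  exists 1 => // x; rewrite mul1r.
  have [->|x0] := eqVneq x 0; first by rewrite normr0 nrm_ge0.
  exfalso; apply: S0; exists (`|x|^-1 *: x); rewrite /S /= normrZ normfV normr_id.
  by rewrite mulVf // normr_eq0.
have cS : compact S.
  apply: bounded_closed_compact.
    rewrite /bounded_set /bounded_near /=; near=> M; rewrite /globally /= => x; rewrite /S /= => ->.
    by near: M; apply: nbhs_pinfty_ge; rewrite num_real.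
  apply: (@preimage_closed _ _ (@normr _ vec) [set 1]).
    by move=> y _; apply: norm_continuous.
  exact: closed_eq.
have cc : {within S, continuous nrm} by apply: continuous_subspaceT; exact: nrm_cont.
have [c Sc cmin] := EVT_min_rV (ex_intro _ x0 Sx0) cS cc.
rewrite inE /S /= in Sc.
have c0 : 0 < nrm c.
  rewrite lt0r nrm_ge0 // andbT; apply/eqP => /(nrm_eq0 Hn) c0.
  by move: Sc; rewrite c0 normr0 => /eqP; rewrite eq_sym oner_eq0.
exists (nrm c)^-1; first by rewrite invr_gt0.
move=> x; have [->|x0'] := eqVneq x 0; first by rewrite normr0 nrm0 // mulr0.
have nx : 0 < `|x| by rewrite normr_gt0.
have := cmin (`|x|^-1 *: x); rewrite inE /S /= normrZ normfV normr_id mulVf ?gt_eqF //.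
move=> /(_ erefl); rewrite (nrmZ Hn) normfV normr_id => H.
rewrite ler_pdivlMl // mulrC.
by rewrite ler_pdivlMl // in H.
Unshelve. all: by end_near.
Qed.

Lemma inner_le_nrm (s : vec) : exists C : R, forall x, inner s x <= C * nrm x.
Proof.
have [c c0 Hc] := norm_lower.
exists ((\sum_(i < n) `|s 0 i|) * c) => x.
apply: (@le_trans _ _ (\sum_(i < n) `|s 0 i| * `|x|)).
  rewrite /inner; apply: ler_sum => i _.
  apply: le_trans (ler_norm _) _; rewrite normrM ler_wpM2l //.
  exact: coord_le_norm.
by rewrite -mulr_suml -mulrA ler_wpM2l ?sumr_ge0.
Qed.

Lemma dual_bound (s d : vec) : inner s d <= dual_norm nrm s * nrm d.
Proof.
have [C HC] := inner_le_nrm s.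
set E := [set inner s x | x in [set x | nrm x <= 1]].
have hs : has_sup E.
  split; first by exists (inner s 0), 0 => //=; rewrite nrm0.
  exists `|C| => _ [x /= x1 <-]; apply: le_trans (HC x) _.
  apply: le_trans (_ : `|C| * nrm x <= _).
    by rewrite ler_wpM2r ?nrm_ge0 ?ler_norm.
  by rewrite -[leRHS]mulr1 ler_wpM2l.
have [d0|dn0] := eqVneq (nrm d) 0.
  by rewrite d0 mulr0 (nrm_eq0 Hn d0) inner0r.
have dp : 0 < nrm d by rewrite lt0r dn0 nrm_ge0.
have : E (inner s ((nrm d)^-1 *: d)).
  exists ((nrm d)^-1 *: d) => //=.
  by rewrite (nrmZ Hn) ger0_norm ?invr_ge0 ?nrm_ge0 // mulVf.
move=> /(sup_upper_bound hs); rewrite innerZr ler_pdivrMl // => H.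
by rewrite mulrC; exact: H.
Qed.
End Norm2.

Lemma mvt_quad_gen (R : realType) (g dg : R -> R) (Hg : forall t : R, is_derive t 1 g (dg t)) (a beta : R) :
  exists2 c : R, 0 < c < 1 & g 1 - g 0 - a - beta = dg c - a - beta * (c + c).
Proof.
have hd : forall t : R, is_derive t 1 (fun s : R => g s - (s * a + beta * (s * s)))
   (dg t - (a + beta * (t + t))).
  move=> t; have Ht := Hg t.
  apply: is_derive_eq.
  by rewrite /= scaler0 add0r /GRing.scale /= !mulr1.
have cont : {within `[0, 1], continuous (fun s : R => g s - (s * a + beta * (s * s)))}.
  apply: derivable_within_continuous => t _.
  exact: (@ex_derive _ _ _ _ _ _ _ (hd t)).
have [c c01 Hc] := MVT ltr01 (fun t _ => hd t) cont.
exists c; first by move: c01; rewrite in_itv.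
move: Hc; rewrite subr0 mulr1 !mul1r !mul0r mulr0 addr0 subr0.
lra.
Qed.

Lemma arith_up (R : realType) (A B C D Ev F : R) :
  A - B - C - D = Ev - C - F -> Ev - C <= F -> A <= B + C + D.
Proof. lra. Qed.
Lemma arith_low (R : realType) (A B C D Ev F : R) :
  A - B - C - - D = Ev - C - - F -> C - Ev <= F -> B + C - D <= A.
Proof. lra. Qed.

Lemma lim_arg (R : realType) (a b K : R) : 0 <= K ->
  (forall t : R, 0 < t < 1 -> a <= b + t * K) -> a <= b.
Proof.
move=> K0 H; apply/ler_addgt0Pr => e e0.
have p : 0 < K + 1 + e by lra.
have := H (e / (K + 1 + e)).
rewrite divr_gt0 //= ltr_pdivrMr // mul1r.
have -> : (e < K + 1 + e) = true by apply/idP; lra.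
move=> /(_ isT) Hb; apply: le_trans Hb _; rewrite lerD2l.
rewrite mulrC mulrA ler_pdivrMr //.
nra.
Qed.

Section Descent.
Variables (R : realType) (n : nat).
Notation vec := 'rV[R]_n.
Variables (nrm : vec -> R) (f : vec -> R) (L : R).
Hypothesis Hn : is_norm nrm.
Hypothesis fd : forall z, differentiable f z.
Hypothesis fs : smooth_wrt nrm L f.
Hypothesis L0 : 0 <= L.

Lemma line_derive (x d : vec) (t : R) :
  is_derive t 1 (fun s : R => f (s *: d + x)) (inner (grad f (t *: d + x)) d).
Proof.
have E : (fun h : R => h^-1 *: (((fun s : R => f (s *: d + x)) \o shift t) (h *: 1)
            - (fun s : R => f (s *: d + x)) t)) =
         (fun h : R => h^-1 *: ((f \o shift (t *: d + x)) (h *: d) - f (t *: d + x))).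
  apply/funext => h /=; congr (_ *: (f _ - _)).
  by rewrite /= scalerDl addrA [h *: 1]mulr1.
split.
  by rewrite /derivable E; exact: diff_derivable.
by rewrite /derive E -/(derive f _ d) deriveE // diff_inner.
Qed.

Lemma innerBl (s t x : vec) : inner (s - t) x = inner s x - inner t x.
Proof. by rewrite innerDl -scaleN1r innerZl mulN1r. Qed.

Lemma descent_up (x d : vec) :
  f (d + x) <= f x + inner (grad f x) d + L / 2 * nrm d ^+ 2.
Proof.
have [c /andP[c0 c1] E] := mvt_quad_gen (line_derive x d) (inner (grad f x) d) (L / 2 * nrm d ^+ 2).
move: E => /=; rewrite scale1r scale0r add0r => E.
have key : inner (grad f (c *: d + x)) d - inner (grad f x) d <= L * (c * nrm d) * nrm d.
  rewrite -innerBl; apply: le_trans (dual_bound Hn _ _) _.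
  apply: ler_wpM2r; first exact: nrm_ge0.
  by have := fs (c *: d + x) x; rewrite (addrK x (c *: d)) (nrmZ Hn) gtr0_norm.
rewrite (_ : L / 2 * nrm d ^+ 2 * (c + c) = L * (c * nrm d) * nrm d) in E; last by field.
exact: (arith_up E key).
Qed.

Lemma descent_low (x d : vec) :
  f x + inner (grad f x) d - L / 2 * nrm d ^+ 2 <= f (d + x).
Proof.
have [c /andP[c0 c1] E] := mvt_quad_gen (line_derive x d) (inner (grad f x) d) (- (L / 2 * nrm d ^+ 2)).
move: E => /=; rewrite scale1r scale0r add0r => E.
have key : inner (grad f x) d - inner (grad f (c *: d + x)) d <= L * (c * nrm d) * nrm d.
  rewrite -innerBl; apply: le_trans (dual_bound Hn _ _) _.
  apply: ler_wpM2r; first exact: nrm_ge0.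
  apply: le_trans (fs x (c *: d + x)) _; rewrite ler_wpM2l //.
  by rewrite opprD addrCA subrr addr0 (nrmN Hn) (nrmZ Hn) gtr0_norm.
rewrite (_ : - (L / 2 * nrm d ^+ 2) * (c + c) = - (L * (c * nrm d) * nrm d)) in E; last by field.
exact: (arith_low E key).
Qed.

Hypothesis fc : convex_fun f.

Lemma grad_ineq (x z : vec) : lin f x z <= f z.
Proof.
rewrite /lin; set a := inner (grad f x) (z - x); set N := nrm (z - x).
suff H : forall t : R, 0 < t < 1 -> a <= f z - f x + t * (L / 2 * N ^+ 2).
  apply: (@le_trans _ _ (f x + (f z - f x))); last by rewrite addrC subrK.
  rewrite lerD2l; apply: (lim_arg _ H).
  by apply: mulr_ge0; [apply: divr_ge0 | apply: exprn_ge0; exact: nrm_ge0].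
move=> t /andP[t0 t1].
have H1 := descent_low x (t *: (z - x)).
have H2 := fc z x (t := t).
have Ev : t *: (z - x) + x = t *: z + (1 - t) *: x.
  by apply/rowP => i; rewrite !mxE; ring.
rewrite Ev innerZr (nrmZ Hn) gtr0_norm // in H1.
have t01 : 0 <= t <= 1 by rewrite !ltW.
have H3 := le_trans H1 (H2 t01).
have : t * a <= t * (f z - f x + t * (L / 2 * N ^+ 2)).
  move: H3; rewrite -/a -/N; move: (f x) (f z) (f (t *: z + (1 - t) *: x)) => A B C.
  rewrite exprMn; move=> H; nra.
by rewrite ler_pM2l.
Qed.

End Descent.

Lemma lam_props (R : realType) (M L eps : R) : 0 < M -> 0 < L -> 0 < eps ->
  let alpha := eps / (2 * M) in
  let lambda := 2 * alpha / (alpha + Num.sqrt (alpha ^+ 2 + 4 * L * alpha)) in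
  [/\ 0 < alpha, 0 < lambda, lambda < 1, L * lambda ^+ 2 = alpha * (1 - lambda) &
      1 <= lambda * (2 * (1 + Num.sqrt (M * L / eps)))].
Proof.
move=> M0 L0 e0 alpha lambda.
have a0 : 0 < alpha by apply: divr_gt0 => //; lra.
set S := Num.sqrt (alpha ^+ 2 + 4 * L * alpha).
have S0 : 0 <= S := sqrtr_ge0 _.
have SS : S ^+ 2 = alpha ^+ 2 + 4 * L * alpha.
  rewrite sqr_sqrtr //; nra.
have Sa : alpha < S.
  have : alpha ^+ 2 < S ^+ 2 by rewrite SS; nra.
  nra.
have aS : 0 < alpha + S by lra.
have laE : lambda * (alpha + S) = 2 * alpha by rewrite /lambda mulrAC -mulrA mulfV ?mulr1 // gt_eqF.
have l0 : 0 < lambda by rewrite /lambda divr_gt0 //; lra.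
split => //.
- by nra.
- have h2 : lambda * S = 2 * alpha - lambda * alpha by move: laE; rewrite mulrDr; lra.
  have h1 : (lambda * S) ^+ 2 = lambda ^+ 2 * (alpha ^+ 2 + 4 * L * alpha) by rewrite exprMn SS.
  rewrite h2 in h1.
  apply: (mulfI (x := 4 * alpha)); first by rewrite gt_eqF //; lra.
  move: h1; generalize (lambda); move=> l h1.
  rewrite !expr2 in h1 *. nra.
- set q := Num.sqrt _.
  have q0 : 0 <= q := sqrtr_ge0 _.
  have qq : q ^+ 2 = M * L / eps by rewrite sqr_sqrtr // divr_ge0 // ?mulr_ge0 // ltW.
  have aq : alpha * q ^+ 2 = L / 2.
    rewrite qq /alpha; field; rewrite !gt_eqF //; lra.
  have ST : S ^+ 2 <= (alpha * (1 + 3 * q)) ^+ 2.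
    rewrite SS (_ : 4 * L * alpha = 8 * alpha * (alpha * q ^+ 2)); last first.
      by rewrite aq; field.
    have : 0 <= alpha ^+ 2 * q by apply: mulr_ge0 => //; apply: sqr_ge0.
    nra.
  have ST' : S <= alpha * (1 + 3 * q).
    have : 0 <= alpha * (1 + 3 * q) by apply: mulr_ge0; lra.
    nra.
  nra.
Qed.

Lemma final_num (R : realType) (lam eps D0 q : R) (k : nat) :
  0 < lam -> lam < 1 -> 0 < eps -> 0 <= D0 -> 0 <= q -> 1 <= lam * (2 * (1 + q)) ->
  2%:R * (1 + q) * (1 + ln (1 + D0 / eps)) <= k%:R ->
  (1 - lam) ^+ k * D0 <= eps / 2.
Proof.
move=> l0 l1 e0 D00 q0 lq Hk.
set u := D0 / eps.
have u0 : 0 <= u by rewrite /u divr_ge0 // ltW.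
have Du : D0 = u * eps by rewrite /u divfK // gt_eqF.
set l := ln (1 + u).
have lg0 : 0 <= l by apply: ln_ge0; lra.
have lk : 1 + l <= lam * k%:R.
  have p : 0 <= 1 + l by lra.
  have a := ler_wpM2l (ltW l0) Hk.
  have b := ler_wpM2r p lq.
  rewrite mul1r in b.
  apply: le_trans b _; apply: le_trans a; by rewrite !mulrA.
have X1 : expR (- l) * (1 + u) = 1.
  by rewrite expRN /l lnK ?mulVf // ?gt_eqF ?posrE; lra.
have E1 : expR (- (1:R)) * 2 <= 1.
  have H := expR_ge1Dx (1 : R).
  have ep : 0 < expR (1 : R) := expR_gt0 _.
  rewrite expRN ler_pdivrMl // mulr1; lra.
have H1 : (1 - lam) ^+ k <= expR (- lam) ^+ k.
  apply: lerXn2r; rewrite ?nnegrE ?(ltW (expR_gt0 _)) //; first lra.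
  by have := expR_ge1Dx (- lam); rewrite addrC.
have H2 : expR (- lam) ^+ k <= expR (- (1:R)) * expR (- l).
  rewrite -expRM_natr -expRD ler_expR; lra.
have Xp : 0 < expR (- l) := expR_gt0 _.
have Ep : 0 < expR (- (1:R)) := expR_gt0 _.
apply: le_trans (ler_wpM2r D00 (le_trans H1 H2)) _.
rewrite Du.
have : expR (- l) * u <= 1 by nra.
have Xu0 : 0 <= expR (- l) * u by apply: mulr_ge0 => //; exact: ltW.
move: E1 X1 Xp Ep Xu0; generalize (expR (- l)) (expR (- (1:R))) => X E E1 X1 Xp Ep Xu0 Xu.
have h : E * (X * u) <= 1 / 2 by nra.
rewrite (_ : E * X * (u * eps) = (E * (X * u)) * eps); last by ring.
apply: le_trans (ler_wpM2r (ltW e0) h) _; lra.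
Qed.

Lemma fin_of (R : realType) (e : \bar R) : (-oo < e)%E -> (e < +oo)%E -> e = (fine e)%:E.
Proof. by case: e. Qed.

Section Main.
Variables (R : realType) (n : nat).
Notation vec := 'rV[R]_n.
Variables (nrm : vec -> R) (f : vec -> R) (L : R) (h w : vec -> \bar R) (M alpha lam : R).
Variables (y0 : vec) (x xt y s : nat -> vec).
Hypothesis Hn : is_norm nrm.
Hypothesis hp : proper_fun h.
Hypothesis hc : econvex_fun h.
Hypothesis w0 : forall z, (0 <= w z)%E.
Hypothesis wsc : strongly_convex_on nrm (dom h) w.
Hypothesis wM : forall z, dom h z -> (w z <= M%:E)%E.
Hypothesis a0 : 0 < alpha.

Definition hr z := fine (h z).
Definition wr z := fine (w z).
Definition Hr z := hr z + alpha * wr z.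

Lemma hE z : dom h z -> h z = (hr z)%:E.
Proof. by move=> dz; apply: fin_of => //; case: hp. Qed.

Lemma wE z : dom h z -> w z = (wr z)%:E.
Proof.
move=> dz; apply: fin_of.
  by apply: lt_le_trans (w0 z); rewrite ltNye.
by apply: le_lt_trans (wM dz) _; rewrite ltry.
Qed.

Lemma haE z : dom h z -> halpha h w alpha z = (Hr z)%:E.
Proof. by move=> dz; rewrite /halpha hE // wE // -EFinM -EFinD. Qed.

Lemma haInf z : ~ dom h z -> halpha h w alpha z = +oo%E.
Proof.
move=> nd; rewrite /halpha.
have -> : h z = +oo%E.
  move: nd; rewrite /dom /=; case: hp => /(_ z).
  by case: (h z) => //= r _ []; rewrite ltry.
have H : (0 <= alpha%:E * w z)%E by apply: mule_ge0; [rewrite lee_fin ltW | exact: w0].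
rewrite addye //; apply/eqP => E; by rewrite E in H.
Qed.

Lemma conv_dom u v t : dom h u -> dom h v -> 0 < t < 1 ->
  dom h (t *: u + (1 - t) *: v) /\
  Hr (t *: u + (1 - t) *: v) <= t * Hr u + (1 - t) * Hr v
     - alpha * (t * (1 - t) / 2 * nrm (u - v) ^+ 2).
Proof.
move=> du dv t01.
have H1 := hc u v t01.
rewrite (hE du) (hE dv) -!EFinM -EFinD in H1.
have dt : dom h (t *: u + (1 - t) *: v).
  by apply: le_lt_trans H1 _; rewrite ltry.
split => //.
rewrite (hE dt) lee_fin in H1.
have H2 := wsc du dv t01.
rewrite (wE du) (wE dv) (wE dt) -!EFinM -EFinD lee_fin in H2.
have H3 := ler_wpM2l (ltW a0) H2.
rewrite /Hr; lra.
Qed.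

Hypothesis l0 : 0 < lam.
Hypothesis l1 : lam < 1.
Hypothesis dy0 : dom h y0.
Hypothesis Hy0 : y 0%N = y0.
Hypothesis Hs0 : s 0%N = grad f y0.
Hypothesis Hx : forall k z, ((inner (s k) (x k))%:E + halpha h w alpha (x k)
                <= (inner (s k) z)%:E + halpha h w alpha z)%E.
Hypothesis Hxt : forall k, xt k.+1 = (1 - lam) *: y k + lam *: x k.
Hypothesis Hs : forall k, s k.+1 = (1 - lam) *: s k + lam *: grad f (xt k.+1).
Hypothesis Hy : forall k, y k.+1 = (1 - lam) *: y k + lam *: x k.+1.

Lemma x_dom k : dom h (x k).
Proof.
case: hp => _ [z0 dz0].
apply/negP => /negP nd; have := Hx k z0; have nd2 : ~ dom h (x k) by move=> H; rewrite H in nd.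
by rewrite (haInf nd2) (haE dz0) addey // -EFinD leNgt ltey.
Qed.

Lemma y_dom k : dom h (y k).
Proof.
elim: k => [|k IH]; first by rewrite Hy0.
have t01 : 0 < 1 - lam < 1 by rewrite subr_gt0 l1 gtrBl l0.
have [+ _] := conv_dom IH (x_dom k.+1) t01.
by rewrite Hy (_ : 1 - (1 - lam) = lam) //; ring.
Qed.

Fixpoint cc k : R := match k with
  | 0 => f y0 - inner (grad f y0) y0
  | k'.+1 => (1 - lam) * cc k' + lam * (f (xt k'.+1) - inner (grad f (xt k'.+1)) (xt k'.+1))
  end.

Definition G k z := Hr z + (cc k + inner (s k) z).

Notation Gam := (acp f h w alpha y0 (fun i => xt i.+1) (fun=> lam)).

Lemma acpE k z : Gam k z = (halpha h w alpha z + (cc k + inner (s k) z)%:E)%E.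
Proof.
elim: k => [|k IH] /=.
  by rewrite /lin Hs0 innerBr; congr (_ + _)%E; congr EFin; ring.
rewrite IH.
have [dz|nd] := pselect (dom h z).
  rewrite haE // -!EFinD; congr EFin.
  rewrite /lin Hs innerDl !innerZl innerBr; ring.
rewrite haInf // !addye // !gt0_muley ?lte_fin ?subr_gt0 // addye //.
Qed.

Lemma acp_dom k z : dom h z -> Gam k z = (G k z)%:E.
Proof. by move=> dz; rewrite acpE haE // -EFinD. Qed.

Lemma acp_ndom k z : ~ dom h z -> Gam k z = +oo%E.
Proof. by move=> nd; rewrite acpE haInf // addye. Qed.

Lemma argmin_real k z : dom h z -> inner (s k) (x k) + Hr (x k) <= inner (s k) z + Hr z.
Proof. by move=> dz; have := Hx k z; rewrite (haE (x_dom k)) (haE dz) -!EFinD lee_fin. Qed.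

Lemma model_minE k : model_min (Gam k) = (G k (x k))%:E.
Proof.
rewrite /model_min; apply/le_anti/andP; split.
  by rewrite -(acp_dom k (x_dom k)); apply: ereal_inf_lbound; exists (x k).
apply: le_ereal_inf_tmp => _ [z _ <-].
have [dz|nd] := pselect (dom h z); last by rewrite acp_ndom // leey.
rewrite acp_dom // lee_fin /G.
have := argmin_real k dz; have := x_dom k => _ H.
lra.
Qed.

Lemma argmin_strong k z : dom h z ->
  inner (s k) (x k) + Hr (x k) + alpha / 2 * nrm (z - x k) ^+ 2 <= inner (s k) z + Hr z.
Proof.
move=> dz.
have K0 : 0 <= alpha / 2 * nrm (z - x k) ^+ 2.
  by apply: mulr_ge0; [apply: divr_ge0; [exact: ltW|] | apply: exprn_ge0; exact: nrm_ge0].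
apply: (lim_arg K0) => t /andP[t0 t1].
have t01 : 0 < 1 - t < 1 by rewrite subr_gt0 t1 gtrBl t0.
have [dp Hp] := conv_dom (x_dom k) dz t01.
have Am := argmin_real k dp.
rewrite innerDr !innerZr (_ : 1 - (1 - t) = t) in Am Hp; last by ring.
rewrite (nrmB Hn) in Hp.
set V1 := inner (s k) (x k) in Am Hp *; set V2 := inner (s k) z in Am Hp *.
set N := nrm (z - x k) in Hp *.
have H : t * (V1 + Hr (x k)) <= t * (V2 + Hr z - alpha * (1 - t) / 2 * N ^+ 2).
  have e : t * (V2 + Hr z - alpha * (1 - t) / 2 * N ^+ 2) =
    t * (V2 + Hr z) - alpha * ((1 - t) * t / 2 * N ^+ 2) by ring.
  rewrite e; lra.
rewrite ler_pM2l // in H.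
have e : alpha * (1 - t) / 2 * N ^+ 2 = alpha / 2 * N ^+ 2 - t * (alpha / 2 * N ^+ 2) by ring.
rewrite e in H; lra.
Qed.

Lemma G_rec k z : G k.+1 z = (1 - lam) * G k z + lam * (Hr z + lin f (xt k.+1) z).
Proof. by rewrite /G /= /lin Hs innerDl !innerZl innerBr; ring. Qed.

Definition D k := f (y k) + Hr (y k) - G k (x k).

Hypothesis fd : forall z, differentiable f z.
Hypothesis fc : convex_fun f.
Hypothesis L0 : 0 < L.
Hypothesis fs : smooth_wrt nrm L f.
Hypothesis lamE : L * lam ^+ 2 = alpha * (1 - lam).

Lemma D_rec k : D k.+1 <= (1 - lam) * D k.
Proof.
set xk := x k; set x1 := x k.+1; set yk := y k; set p := xt k.+1; set g := grad f p.
have Ey : y k.+1 = lam *: (x1 - xk) + p.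
  by apply/rowP => i; rewrite Hy /p Hxt !mxE; ring.
have Hd := descent_up Hn fd fs p (lam *: (x1 - xk)).
rewrite -Ey (nrmZ Hn) gtr0_norm // in Hd.
have Ei : inner g (lam *: (x1 - xk)) = (1 - lam) * inner g (yk - p) + lam * inner g (x1 - p).
  have -> : lam *: (x1 - xk) = (1 - lam) *: (yk - p) + lam *: (x1 - p).
    by apply/rowP => i; rewrite /p Hxt !mxE; ring.
  by rewrite [in LHS]innerDr ![in LHS]innerZr.
rewrite Ei in Hd.
have Hgi := grad_ineq Hn fd fs (ltW L0) fc p yk.
rewrite /lin -/g in Hgi.
have t01 : 0 < 1 - lam < 1 by rewrite subr_gt0 l1 gtrBl l0.
have [_ Hc] := conv_dom (y_dom k) (x_dom k.+1) t01.
rewrite (_ : 1 - (1 - lam) = lam) in Hc; last by ring.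
rewrite -Hy in Hc.
have Hq : 0 <= alpha * ((1 - lam) * lam / 2 * nrm (yk - x1) ^+ 2).
  apply: mulr_ge0; first exact: ltW.
  apply: mulr_ge0; last by apply: exprn_ge0; exact: nrm_ge0.
  apply: divr_ge0 => //; apply: mulr_ge0; [rewrite subr_ge0; exact: ltW | exact: ltW].
have Hgr := G_rec k x1.
rewrite /lin -/g -/p in Hgr.
have Has := argmin_strong k (x_dom k.+1).
rewrite -/xk -/x1 in Has.
set N := nrm (x1 - xk) in Hd Has.
have l1' : 0 <= 1 - lam by rewrite subr_ge0 ltW.
have Hgi' := ler_wpM2l l1' Hgi.
have HG : G k xk + alpha / 2 * N ^+ 2 <= G k x1.
  rewrite /G; lra.
have HG' := ler_wpM2l l1' HG.
have HL : L / 2 * (lam * N) ^+ 2 = alpha * (1 - lam) / 2 * N ^+ 2.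
  have -> : L / 2 * (lam * N) ^+ 2 = (L * lam ^+ 2) / 2 * N ^+ 2 by ring.
  by rewrite lamE.
rewrite /D -/yk -/xk.
lra.
Qed.

Lemma D_bound k : D k <= (1 - lam) ^+ k * D 0.
Proof.
elim: k => [|k IH]; first by rewrite expr0 mul1r.
apply: le_trans (D_rec k) _.
rewrite exprS -mulrA ler_wpM2l // subr_ge0 ltW //.
Qed.

Lemma D0_ge0 : 0 <= D 0.
Proof.
have := argmin_real 0 dy0.
rewrite /D /G /= Hy0 Hs0 => H.
lra.
Qed.

Lemma cert_val k :
  ((f (y k))%:E + halpha h w alpha (y k) - model_min (Gam k))%E = (D k)%:E.
Proof. by rewrite (haE (y_dom k)) model_minE /D -EFinD. Qed.

End Main.

Unset Implicit Arguments.

Theorem theorem5p1 :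
  exists C : nat,
  forall (R : realType) (n : nat) (nrm : 'rV[R]_n -> R) (f : 'rV[R]_n -> R)
    (L : R) (h w : 'rV[R]_n -> \bar R) (M eps : R)
    (y0 : 'rV[R]_n) (x xt y s : nat -> 'rV[R]_n),
  is_norm nrm ->
  (forall z, differentiable f z) -> convex_fun f -> 0 < L -> smooth_wrt nrm L f ->
  proper_fun h -> econvex_fun h -> closed_fun h -> bounded_wrt nrm (dom h) ->
  (forall z, (0 <= w z)%E) -> closed_fun w -> strongly_convex_on nrm (dom h) w ->
  0 < M -> (forall z, dom h z -> (w z <= M%:E)%E) ->
  (exists z, dom h z /\ w z = M%:E) ->
  0 < eps ->
  let alpha := eps / (2 * M) in
  let lambda := 2 * alpha / (alpha + Num.sqrt (alpha ^+ 2 + 4 * L * alpha)) in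
  dom h y0 ->
  (* TAA iterates *)
  y 0%N = y0 ->
  s 0%N = grad f y0 ->
  (forall k z, ((inner (s k) (x k))%:E + halpha h w alpha (x k)
                <= (inner (s k) z)%:E + halpha h w alpha z)%E) ->
  (forall k, xt k.+1 = (1 - lambda) *: y k + lambda *: x k) ->
  (forall k, s k.+1 = (1 - lambda) *: s k + lambda *: grad f (xt k.+1)) ->
  (forall k, y k.+1 = (1 - lambda) *: y k + lambda *: x k.+1) ->
  let Gamma := acp f h w alpha y0 (fun i => xt i.+1) (fun=> lambda) in
  let gap0 := fine ((f y0)%:E + halpha h w alpha y0 - model_min (Gamma 0%N))%E in
  forall k : nat,
    C%:R * (1 + Num.sqrt (M * L / eps)) * (1 + ln (1 + gap0 / eps)) <= k%:R ->
    eps_certificate f h w M alpha eps (y k) (Gamma k).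
Proof.
exists 2%N.
move=> R n nrm f L h w M eps y0 x xt y s Hn fd fc L0 fs hp hc hcl hb w0 wcl wsc M0 wM wex e0
  alpha lambda dy0 Hy0 Hs0 Hx Hxt Hs Hy Gamma gap0 k Hk.
subst gap0 Gamma lambda alpha.
case: (lam_props M0 L0 e0) => a0 l0 l1 lamE lq.
have cv := cert_val hp hc w0 wsc wM a0 l0 l1 dy0 Hy0 Hs0 Hx Hs Hy k.
have Db := D_bound Hn hp hc w0 wsc wM a0 l0 l1 dy0 Hy0 Hx Hxt Hs Hy fd fc L0 fs lamE k.
have D0 := D0_ge0 _ xt hp w0 wM a0 dy0 Hy0 Hs0 Hx.
have g0 := cert_val hp hc w0 wsc wM a0 l0 l1 dy0 Hy0 Hs0 Hx Hs Hy 0.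
rewrite Hy0 in g0; rewrite g0 /= in Hk.
split.
- exact: (y_dom hp hc w0 wsc wM a0 l0 l1 dy0 Hy0 Hx Hy k).
- by [].
- rewrite cv lee_fin; apply: le_trans Db _.
  exact: (final_num l0 l1 e0 (D0 _) (sqrtr_ge0 _) lq).
Qed.
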